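(* Let $(X,I,T)$ be a relative monad in a 2-category $\mathcal{K}$ with $I,T\colon X_0\to X$, unit $t$ and extension $(-)^\dagger$. Let $U\colon\mathrm{Mod}^T(-)\to\mathcal{K}(-,X)$ be the forgetful 2-natural transformation $(M,(-)^m)\mapsto M$, let $F\colon\mathcal{K}(-,X_0)\to\mathrm{Mod}^T(-)$ send $M\colon K\to X_0$ to $(TM,(-)^{\dagger})$, where the operator is $h\mapsto h^\dagger$ for $h\colon IA\Rightarrow TMB$, and let $I_*=I\circ-\colon\mathcal{K}(-,X_0)\to\mathcal{K}(-,X)$. Then $F$ and $U$ form a relative adjunction $F\,{}_{I_*}\!\dashv U$ in $\hat{\mathcal{K}}=[\mathcal{K}^{op},\mathbf{Cat}]$ with unit the modification with components $tM\colon IM\Rightarrow TM$; in particular for every $K$, $M\colon K\to X_0$ and $(N,(-)^n)\in\mathrm{Mod}^T(K)$ the map $\mathrm{Mod}^T(K)(FM,(N,(-)^n))\to\mathcal{K}[K,X](IM,N)$, $g\mapsto g\cdot tM$, is a bijection with inverse $f\mapsto f^n$. Moreover the relative monad induced by this relative adjunction is $(\mathcal{K}(-,X),I_*,T_* )$ with $T_*=T\circ-$, i.e. the relative monad in $\hat{\mathcal{K}}$ whose unit and extension are given componentwise by $t$ and $(-)^\dagger$.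
   Context: Conventions: $\mathcal{K}[O,Z]$ denotes a hom-category; 1-cells compose by juxtaposition; vertical composition of 2-cells is written $\cdot$; whiskering by juxtaposition. Operator: given 1-cells $F\colon X\to Z$, $G\colon Y\to Z$, $F'\colon X\to Z'$, $G'\colon Y\to Z'$, an operator $(-)^\#\colon[F,G]\to[F',G']$ is a family of functions, indexed by spans $A\colon O\to X$, $B\colon O\to Y$, $(-)^\#_{A,B}\colon\mathcal{K}[O,Z](FA,GB)\to\mathcal{K}[O,Z'](F'A,G'B)$, with $(fP)^\#=f^\#P$, $(f\cdot F\alpha)^\#=f^\#\cdot F'\alpha$, $(G\beta\cdot f)^\#=G'\beta\cdot f^\#$ for all 1-cells $P\colon O'\to O$ and 2-cells $\alpha\colon A'\Rightarrow A$, $\beta\colon B\Rightarrow B'$. Relative monad: a relative monad $(X,I,S)$ in $\mathcal{K}$ consists of objects $X_0,X$, 1-cells $I,S\colon X_0\to X$, an operator $(-)^\dagger=(-)^\dagger_S\colon[I,S]\to[S,S]$ (extension) and a 2-cell $s\colon I\Rightarrow S$ (unit) such that for all 1-cells $A,B,C\colon O\to X_0$ and 2-cells $k\colon IA\Rightarrow SB$, $l\colon IB\Rightarrow SC$: $k^\dagger\cdot sA=k$; $(sA)^\dagger=1_{SA}$; $(l^\dagger\cdot k)^\dagger=l^\dagger\cdot k^\dagger$. Relative adjunction: for a 1-cell $I\colon C_0\to C$, a relative adjunction over $I$, written $F\,{}_I\!\dashv G$, consists of an object $D$, 1-cells $F\colon C_0\to D$, $G\colon D\to C$ and a 2-cell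 $\iota\colon I\Rightarrow GF$ such that for every object $O$ and 1-cells $A\colon O\to C_0$, $B\colon O\to D$ the function $\mathcal{K}[O,D](FA,B)\to\mathcal{K}[O,C](IA,GB)$, $\alpha\mapsto G\alpha\cdot\iota A$, is a bijection. It induces the relative monad $(C,I,GF)$ with unit $\iota$ and extension $f\mapsto G(f^\flat)$, where $f^\flat$ is the unique 2-cell with $G(f^\flat)\cdot\iota A=f$. Relative EM-algebras: for an object $K$, a $K$-indexed relative EM-algebra is a 1-cell $M\colon K\to X$ with an operator $(-)^m\colon[I,M]\to[T,M]$ (for the cospans $(I,M)$ and $(T,M)$ from $X_0;K$ to $X$) such that for all $A,C\colon O\to X_0$, $B\colon O\to K$ and 2-cells $h\colon IA\Rightarrow MB$, $k\colon IC\Rightarrow TA$: $h^m\cdot tA=h$ and $(h^m\cdot k)^m=h^m\cdot k^\dagger$. A morphism $(M,(-)^m)\to(N,(-)^n)$ is a 2-cell $g\colon M\Rightarrow N$ with $gB\cdot h^m=(gB\cdot h)^n$ for all such $h$. These form a category $\mathrm{Mod}^T(K)$ and a 2-functor $\mathrm{Mod}^T(-)\colon\mathcal{K}^{op}\to\mathbf{Cat}$ acting by precomposition ($P\colon K'\to K$ sends $(M,(-)^m)$ to $MP$ with operator $h\mapsto h^m_{A,PB}$). *)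

(* Defs.v *)
From Corelib Require Import ssreflect ssrfun ssrbool.
From Stdlib Require Import ProofIrrelevance.

Set Implicit Arguments.
Unset Strict Implicit.
Unset Printing Implicit Defensive.

(* Strict 2-categories.  2-cells are "single-sorted": a 2-cell of the   *)
(* hom-category K[x,y] is an element of [C2 x y] carrying its boundary  *)
(* [src2], [tgt2] (so that the strict associativity of 1-cells, which  *)
(* only holds propositionally, causes no dependent-type problems).      *)
(*   vcomp a b   = a . b  (vertical composite, b first)                 *)
Record Data := {
  Ob : Type;
  H1 : Ob -> Ob -> Type;
  C2 : Ob -> Ob -> Type;
  src2 : forall x y, C2 x y -> H1 x y;
  tgt2 : forall x y, C2 x y -> H1 x y;
  id1 : forall x, H1 x x;
  comp1 : forall x y z, H1 y z -> H1 x y -> H1 x z;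
  id2 : forall x y, H1 x y -> C2 x y;
  vcomp : forall x y, C2 x y -> C2 x y -> C2 x y;
  whl : forall x y z, H1 y z -> C2 x y -> C2 x z;
  whr : forall x y z, C2 y z -> H1 x y -> C2 x z
}.
Arguments id1 {d} x.
Arguments H1 : clear implicits.
Arguments C2 : clear implicits.

Definition cell (K : Data) (x y : Ob K) (a : C2 K x y) (F G : H1 K x y) : Prop :=
  src2 a = F /\ tgt2 a = G.

Record is_twocat (K : Data) : Prop := {
  comp1A : forall x y z w (F : H1 K z w) (G : H1 K y z) (H : H1 K x y),
      comp1 F (comp1 G H) = comp1 (comp1 F G) H;
  comp1_idl : forall x y (F : H1 K x y), comp1 (id1 y) F = F;
  comp1_idr : forall x y (F : H1 K x y), comp1 F (id1 x) = F;
  id2_cell : forall x y (F : H1 K x y), cell (id2 F) F F;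
  vcomp_cell : forall x y (a b : C2 K x y),
      src2 a = tgt2 b -> cell (vcomp a b) (src2 b) (tgt2 a);
  whl_cell : forall x y z (F : H1 K y z) (a : C2 K x y),
      cell (whl F a) (comp1 F (src2 a)) (comp1 F (tgt2 a));
  whr_cell : forall x y z (a : C2 K y z) (P : H1 K x y),
      cell (whr a P) (comp1 (src2 a) P) (comp1 (tgt2 a) P);
  vcompA : forall x y (a b c : C2 K x y), src2 a = tgt2 b -> src2 b = tgt2 c ->
      vcomp a (vcomp b c) = vcomp (vcomp a b) c;
  vcomp_idl : forall x y (a : C2 K x y), vcomp (id2 (tgt2 a)) a = a;
  vcomp_idr : forall x y (a : C2 K x y), vcomp a (id2 (src2 a)) = a;
  whl_vcomp : forall x y z (F : H1 K y z) (a b : C2 K x y), src2 a = tgt2 b ->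
      whl F (vcomp a b) = vcomp (whl F a) (whl F b);
  whl_id2 : forall x y z (F : H1 K y z) (G : H1 K x y),
      whl F (id2 G) = id2 (comp1 F G);
  whr_vcomp : forall x y z (a b : C2 K y z) (P : H1 K x y), src2 a = tgt2 b ->
      whr (vcomp a b) P = vcomp (whr a P) (whr b P);
  whr_id2 : forall x y z (G : H1 K y z) (P : H1 K x y),
      whr (id2 G) P = id2 (comp1 G P);
  whl_comp : forall x y z w (F : H1 K z w) (G : H1 K y z) (a : C2 K x y),
      whl (comp1 F G) a = whl F (whl G a);
  whl_id1 : forall x y (a : C2 K x y), whl (id1 y) a = a;
  whr_comp : forall x y z w (a : C2 K z w) (P : H1 K y z) (Q : H1 K x y),
      whr (whr a P) Q = whr a (comp1 P Q);
  whr_id1 : forall x y (a : C2 K x y), whr a (id1 x) = a;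
  whl_whr : forall x y z w (F : H1 K z w) (a : C2 K y z) (P : H1 K x y),
      whr (whl F a) P = whl F (whr a P);
  interchange : forall x y z (a : C2 K y z) (b : C2 K x y),
      vcomp (whr a (tgt2 b)) (whl (src2 a) b) = vcomp (whl (tgt2 a) b) (whr a (src2 b))
}.

Record TwoCat := { tc :> Data; tc_ax : is_twocat tc }.

(* Operators [F,G] -> [F',G'].  For a cospan F : X -> Z, G : Y -> Z and *)
(* a span A : O -> X, B : O -> Y, the component (-)^#_{A,B} is a       *)
(* function on the 2-cells h : FA => GB (the boundary proof [e] is an   *)
(* argument, so values are only specified on well-typed inputs).       *)
Definition optype (K : Data) (X Y Z : Ob K) (F : H1 K X Z) (G : H1 K Y Z) (Z' : Ob K) :=
  forall (O : Ob K) (A : H1 K O X) (B : H1 K O Y) (h : C2 K O Z),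
    cell h (comp1 F A) (comp1 G B) -> C2 K O Z'.

Record is_operator (K : Data) (X Y Z Z' : Ob K) (F : H1 K X Z) (G : H1 K Y Z)
    (F' : H1 K X Z') (G' : H1 K Y Z') (op : optype F G Z') : Prop := {
  op_cell : forall O (A : H1 K O X) (B : H1 K O Y) h (e : cell h (comp1 F A) (comp1 G B)),
      cell (op O A B h e) (comp1 F' A) (comp1 G' B);
  op_whr : forall O O' (P : H1 K O' O) (A : H1 K O X) (B : H1 K O Y) h e e',
      op O' (comp1 A P) (comp1 B P) (whr h P) e' = whr (op O A B h e) P;
  op_natl : forall O (A A' : H1 K O X) (B : H1 K O Y) (a : C2 K O X) h,
      cell a A' A -> forall e e',
      op O A' B (vcomp h (whl F a)) e' = vcomp (op O A B h e) (whl F' a);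
  op_natr : forall O (A : H1 K O X) (B B' : H1 K O Y) (b : C2 K O Y) h,
      cell b B B' -> forall e e',
      op O A B' (vcomp (whl G b) h) e' = vcomp (whl G' b) (op O A B h e)
}.

Record is_relmonad (K : Data) (X0 X : Ob K) (I S : H1 K X0 X)
    (ext : optype I S X) (s : C2 K X0 X) : Prop := {
  rm_unit_cell : cell s I S;
  rm_op : is_operator S S ext;
  rm_law1 : forall O (A B : H1 K O X0) k (e : cell k (comp1 I A) (comp1 S B)),
      vcomp (ext O A B k e) (whr s A) = k;
  rm_law2 : forall O (A : H1 K O X0) e, ext O A A (whr s A) e = id2 (comp1 S A);
  rm_law3 : forall O (A B C : H1 K O X0) k l
      (ek : cell k (comp1 I A) (comp1 S B)) (el : cell l (comp1 I B) (comp1 S C)) e,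
      ext O A C (vcomp (ext O B C l el) k) e = vcomp (ext O B C l el) (ext O A B k ek)
}.

Arguments is_relmonad {K X0 X} I S ext s.

Lemma opE (K : Data) (X Y Z Z' : Ob K) (F : H1 K X Z) (G : H1 K Y Z)
    (op : optype F G Z') O (A A' : H1 K O X) (B B' : H1 K O Y) h h' e e' :
  A = A' -> B = B' -> h = h' -> op O A B h e = op O A' B' h' e'.
Proof. move=> eA eB eh; subst; f_equal; apply: proof_irrelevance. Qed.

Lemma cell_eq (K : Data) (x y : Ob K) (a : C2 K x y) (F G F' G' : H1 K x y) :
  cell a F G -> F = F' -> G = G' -> cell a F' G'.
Proof. by move=> ? <- <-. Qed.

Section CellLemmas.
Variables (K : Data) (HK : is_twocat K).

Lemma cellW x y z (a : C2 K y z) F G (P : H1 K x y) :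
  cell a F G -> cell (whr a P) (comp1 F P) (comp1 G P).
Proof. by case=> <- <-; apply: whr_cell. Qed.

Lemma cellL x y z (a : C2 K x y) F G (H : H1 K y z) :
  cell a F G -> cell (whl H a) (comp1 H F) (comp1 H G).
Proof. by case=> <- <-; apply: whl_cell. Qed.

Lemma cellV x y (a b : C2 K x y) F G H :
  cell a G H -> cell b F G -> cell (vcomp a b) F H.
Proof.
case=> sa ta [sb tb]; rewrite -sb -ta; apply: vcomp_cell => //.
by rewrite sa tb.
Qed.
End CellLemmas.

Unset Implicit Arguments.
Section ModT.
Variables (K : Data) (HK : is_twocat K).
Variables (X0 X : Ob K) (I T : H1 K X0 X) (ext : optype I T X) (t : C2 K X0 X).

Record is_alg (Kc : Ob K) (M : H1 K Kc X) (m : optype I M X) : Prop := {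
  alg_op : is_operator T M m;
  alg_unit : forall O (A : H1 K O X0) (B : H1 K O Kc) h e,
      vcomp (m O A B h e) (whr t A) = h;
  alg_ext : forall O (A C : H1 K O X0) (B : H1 K O Kc) h k
      (eh : cell h (comp1 I A) (comp1 M B)) (ek : cell k (comp1 I C) (comp1 T A)) e,
      m O C B (vcomp (m O A B h eh) k) e = vcomp (m O A B h eh) (ext O C A k ek)
}.

Arguments is_alg [Kc] M m.
Arguments alg_op [Kc M m].
Arguments alg_unit [Kc M m].
Arguments alg_ext [Kc M m].

Record ModOb (Kc : Ob K) := MkModOb {
  mcar : H1 K Kc X; mop : optype I mcar X; mok : is_alg mcar mop }.
Arguments MkModOb [Kc] mcar mop mok.
Arguments mcar [Kc] m.
Arguments mop [Kc] m.
Arguments mok [Kc] m.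

Definition is_mor (Kc : Ob K) (M N : ModOb Kc) (g : C2 K Kc X) : Prop :=
  cell g (mcar M) (mcar N) /\
  forall O (A : H1 K O X0) (B : H1 K O Kc) h e e',
    vcomp (whr g B) (mop M O A B h e) = mop N O A B (vcomp (whr g B) h) e'.

Record ModAr (Kc : Ob K) := MkModAr {
  mdom : ModOb Kc; mcod : ModOb Kc; mcell : C2 K Kc X; mhom : is_mor Kc mdom mcod mcell }.
Arguments MkModAr [Kc] mdom mcod mcell mhom.
Arguments mdom [Kc] m.
Arguments mcod [Kc] m.
Arguments mcell [Kc] m.
Arguments mhom [Kc] m.
Arguments is_mor [Kc] M N g.

Lemma is_mor_id Kc (M : ModOb Kc) : is_mor M M (id2 (mcar M)).
Proof.
split; first exact: id2_cell.
move=> O A B h e e'.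
have [_ tm] := op_cell (alg_op (mok M)) e.
transitivity (mop M O A B h e).
  by rewrite (whr_id2 HK) -tm (vcomp_idl HK).
apply: opE => //; case: e {e' tm} => _ th.
by rewrite (whr_id2 HK) -th (vcomp_idl HK).
Qed.

Lemma is_mor_comp Kc (g f : ModAr Kc) :
  mdom g = mcod f -> is_mor (mdom f) (mcod g) (vcomp (mcell g) (mcell f)).
Proof.
case: g f => L N g [cg hg] [M L' f [cf hf]] /= E; subst L'.
split; first exact: cellV cg cf.
move=> O A B h e e'.
have sg : src2 g = tgt2 f by case: cg => -> _; case: cf => _ ->.
have cfB := cellW HK B cf; have cgB := cellW HK B cg.
have e1 : cell (vcomp (whr f B) h) (comp1 I A) (comp1 (mcar L) B).
  exact: cellV cfB e.
have e2 : cell (vcomp (whr g B) (vcomp (whr f B) h)) (comp1 I A) (comp1 (mcar N) B).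
  exact: cellV cgB e1.
have [_ tm] := op_cell (alg_op (mok M)) e.
have s1 : src2 (whr g B) = tgt2 (whr f B) by case: cgB => -> _; case: cfB => _ ->.
have s2 : src2 (whr f B) = tgt2 h by case: cfB => -> _; case: (e) => _ ->.
transitivity (mop N O A B (vcomp (whr g B) (vcomp (whr f B) h)) e2).
  have s3 : src2 (whr f B) = tgt2 (mop M O A B h e) by case: cfB => -> _; rewrite tm.
  rewrite (whr_vcomp HK B sg) -(vcompA HK s1 s3).
  by rewrite (hf _ _ _ _ _ e1) (hg _ _ _ _ _ e2).
by apply: opE => //; rewrite (whr_vcomp HK B sg) (vcompA HK s1 s2).
Qed.

Definition mid Kc (M : ModOb Kc) : ModAr Kc := MkModAr M M _ (is_mor_id Kc M).
Definition mcomp Kc (g f : ModAr Kc) (E : mdom g = mcod f) : ModAr Kc :=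
  MkModAr _ _ _ (is_mor_comp Kc g f E).

Definition res_op Kc K' (P : H1 K K' Kc) (M : H1 K Kc X) (m : optype I M X) :
  optype I (comp1 M P) X :=
  fun O A B h e => m O A (comp1 P B) h (cell_eq e erefl (esym (comp1A HK M P B))).

Lemma res_alg Kc K' (P : H1 K K' Kc) (M : ModOb Kc) :
  is_alg (comp1 (mcar M) P) (res_op Kc K' P (mcar M) (mop M)).
Proof.
case: M => M m [[oc ow ol or] au ae]; rewrite /res_op /=.
split; [split|..].
- move=> O A B h e; apply: cell_eq (oc _ _ _ _ _) _ _ => //; exact: comp1A.
- move=> O O' Q A B h e e'.
  have e2 : cell (whr h Q) (comp1 I (comp1 A Q)) (comp1 M (comp1 (comp1 P B) Q)).
    apply: cell_eq (cellW HK Q (cell_eq e erefl (esym (comp1A HK M P B)))) _ _;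
    by rewrite !(comp1A HK).
  by rewrite -(ow _ _ _ _ _ _ _ e2); apply: opE => //; rewrite !(comp1A HK).
- move=> O A A' B a h ca e e'; exact: (ol _ _ _ _ _ _ ca).
- move=> O A B B' b h cb e e'.
  have cb' : cell (whl P b) (comp1 P B) (comp1 P B') by apply: cellL.
  have e2 : cell (vcomp (whl M (whl P b)) h) (comp1 I A) (comp1 M (comp1 P B')).
    exact: cellV (cellL HK M cb') (cell_eq e erefl (esym (comp1A HK M P B))).
  transitivity (m O A (comp1 P B') (vcomp (whl M (whl P b)) h) e2).
    by apply: opE => //; rewrite (whl_comp HK).
  by rewrite (whl_comp HK M P b) (or _ _ _ _ _ _ cb' (cell_eq e erefl (esym (comp1A HK M P B))) e2).
- by move=> O A B h e; apply: au.
- move=> O A C B h k eh ek e; exact: (ae _ _ _ _ _ _ _ ek).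
Qed.

Definition mres Kc K' (P : H1 K K' Kc) (M : ModOb Kc) : ModOb K' :=
  MkModOb _ _ (res_alg Kc K' P M).

Lemma res_mor Kc K' (P : H1 K K' Kc) (f : ModAr Kc) :
  is_mor (mres Kc K' P (mdom f)) (mres Kc K' P (mcod f)) (whr (mcell f) P).
Proof.
case: f => M N g [cg hg]; split; first exact: cellW.
move=> O A B h e e' /=; rewrite /res_op.
have e1 := cell_eq e erefl (esym (comp1A HK (mcar M) P B)).
have e2 : cell (vcomp (whr g (comp1 P B)) h) (comp1 I A) (comp1 (mcar N) (comp1 P B)).
  exact: cellV (cellW HK _ cg) e1.
transitivity (mop N O A (comp1 P B) (vcomp (whr g (comp1 P B)) h) e2).
  by rewrite (whr_comp HK) (hg _ _ _ _ _ e2).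
by apply: opE => //; rewrite (whr_comp HK).
Qed.

Definition mresAr Kc K' (P : H1 K K' Kc) (f : ModAr Kc) : ModAr K' :=
  MkModAr _ _ _ (res_mor Kc K' P f).

Lemma res2_mor Kc K' (a : C2 K K' Kc) (M : ModOb Kc) :
  is_mor (mres Kc K' (src2 a) M) (mres Kc K' (tgt2 a) M) (whl (mcar M) a).
Proof.
case: M => M m [[oc ow ol or] au ae]; split; first exact: whl_cell.
move=> O A B h e e' /=; rewrite /res_op.
have cb : cell (whr a B) (comp1 (src2 a) B) (comp1 (tgt2 a) B) by exact: whr_cell.
have e2 : cell (vcomp (whl M (whr a B)) h) (comp1 I A) (comp1 M (comp1 (tgt2 a) B)).
  exact: cellV (cellL HK M cb) (cell_eq e erefl (esym (comp1A HK M (src2 a) B))).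
transitivity (m O A (comp1 (tgt2 a) B) (vcomp (whl M (whr a B)) h) e2).
  by rewrite (whl_whr HK) (or _ _ _ _ _ _ cb (cell_eq e erefl (esym (comp1A HK M (src2 a) B))) e2).
by apply: opE => //; rewrite (whl_whr HK).
Qed.

Definition mres2 Kc K' (a : C2 K K' Kc) (M : ModOb Kc) : ModAr K' :=
  MkModAr _ _ _ (res2_mor Kc K' a M).

End ModT.
Arguments mcar {K X0 X I T ext t Kc} m.
Arguments mop {K X0 X I T ext t Kc} m.
Arguments mok {K X0 X I T ext t Kc} m.
Arguments mdom {K X0 X I T ext t Kc} m.
Arguments mcod {K X0 X I T ext t Kc} m.
Arguments mcell {K X0 X I T ext t Kc} m.
Arguments mhom {K X0 X I T ext t Kc} m.
Arguments is_alg {K X0 X I T} ext t {Kc} M m.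
Arguments is_mor {K X0 X I T ext t Kc} M N g.

(* An object is a (strict) 2-functor O : K^op -> Cat, given by, for each *)
(* object k, a category O(k) (objects [pOb O k], arrows [pAr O k] with   *)
(* domain/codomain, identities, composition of composable arrows), for   *)
(* each 1-cell P : k' -> k a functor P^* = (pobmap P, parmap P) :        *)
(* O(k) -> O(k'), and for each 2-cell a : P => P' a natural             *)
(* transformation a^* : P^* => P'^* with components [p2 O a x].         *)
Record PSh (K : Data) := MkPSh {
  pOb : Ob K -> Type;
  pAr : Ob K -> Type;
  pdom : forall k, pAr k -> pOb k;
  pcod : forall k, pAr k -> pOb k;
  pid : forall k, pOb k -> pAr k;
  pcomp : forall k (g f : pAr k), pdom k g = pcod k f -> pAr k;
  pobmap : forall k k', H1 K k' k -> pOb k -> pOb k';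
  parmap : forall k k', H1 K k' k -> pAr k -> pAr k';
  p2 : forall k k', C2 K k' k -> pOb k -> pAr k'
}.
Arguments pOb {K} p k.
Arguments pAr {K} p k.
Arguments pdom {K} p {k} f.
Arguments pcod {K} p {k} f.
Arguments pid {K} p {k} x.
Arguments pcomp {K} p {k} g f e.
Arguments pobmap {K} p {k k'} P x.
Arguments parmap {K} p {k k'} P f.
Arguments p2 {K} p {k k'} a x.

Record is_2functor (K : Data) (O : PSh K) : Prop := {
  c_id_dom : forall k (x : pOb O k), pdom O (pid O x) = x;
  c_id_cod : forall k (x : pOb O k), pcod O (pid O x) = x;
  c_comp_dom : forall k (g f : pAr O k) e, pdom O (pcomp O g f e) = pdom O f;
  c_comp_cod : forall k (g f : pAr O k) e, pcod O (pcomp O g f e) = pcod O g;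
  c_compA : forall k (h g f : pAr O k) e1 e2 e3 e4,
      pcomp O h (pcomp O g f e1) e2 = pcomp O (pcomp O h g e3) f e4;
  c_idl : forall k (f : pAr O k) e, pcomp O (pid O (pcod O f)) f e = f;
  c_idr : forall k (f : pAr O k) e, pcomp O f (pid O (pdom O f)) e = f;
  m_dom : forall k k' (P : H1 K k' k) (f : pAr O k),
      pdom O (parmap O P f) = pobmap O P (pdom O f);
  m_cod : forall k k' (P : H1 K k' k) (f : pAr O k),
      pcod O (parmap O P f) = pobmap O P (pcod O f);
  m_id : forall k k' (P : H1 K k' k) (x : pOb O k),
      parmap O P (pid O x) = pid O (pobmap O P x);
  m_comp : forall k k' (P : H1 K k' k) (g f : pAr O k) e e',
      parmap O P (pcomp O g f e) = pcomp O (parmap O P g) (parmap O P f) e';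
  s_ob_id : forall k (x : pOb O k), pobmap O (id1 k) x = x;
  s_ar_id : forall k (f : pAr O k), parmap O (id1 k) f = f;
  s_ob_comp : forall k k' k'' (P : H1 K k' k) (Q : H1 K k'' k') (x : pOb O k),
      pobmap O (comp1 P Q) x = pobmap O Q (pobmap O P x);
  s_ar_comp : forall k k' k'' (P : H1 K k' k) (Q : H1 K k'' k') (f : pAr O k),
      parmap O (comp1 P Q) f = parmap O Q (parmap O P f);
  t_dom : forall k k' (a : C2 K k' k) (x : pOb O k), pdom O (p2 O a x) = pobmap O (src2 a) x;
  t_cod : forall k k' (a : C2 K k' k) (x : pOb O k), pcod O (p2 O a x) = pobmap O (tgt2 a) x;
  t_nat : forall k k' (a : C2 K k' k) (f : pAr O k) e e',
      pcomp O (p2 O a (pcod O f)) (parmap O (src2 a) f) e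
      = pcomp O (parmap O (tgt2 a) f) (p2 O a (pdom O f)) e';
  t_id2 : forall k k' (P : H1 K k' k) (x : pOb O k), p2 O (id2 P) x = pid O (pobmap O P x);
  t_vcomp : forall k k' (a b : C2 K k' k) (x : pOb O k), src2 a = tgt2 b -> forall e,
      p2 O (vcomp a b) x = pcomp O (p2 O a x) (p2 O b x) e;
  t_whr : forall k k' k'' (a : C2 K k' k) (Q : H1 K k'' k') (x : pOb O k),
      p2 O (whr a Q) x = parmap O Q (p2 O a x);
  t_whl : forall k0 k k' (R : H1 K k k0) (a : C2 K k' k) (x : pOb O k0),
      p2 O (whl R a) x = p2 O a (pobmap O R x)
}.

Arguments is_2functor {K} O.

Record PTrans (K : Data) (O O' : PSh K) := MkPTrans {
  tob : forall k, pOb O k -> pOb O' k;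
  tar : forall k, pAr O k -> pAr O' k }.
Arguments PTrans {K} O O'.
Arguments MkPTrans {K O O'} tob tar.
Arguments tob {K O O'} p {k} x.
Arguments tar {K O O'} p {k} f.

Record is_2nat (K : Data) (O O' : PSh K) (A : PTrans O O') : Prop := {
  n_dom : forall k (f : pAr O k), pdom O' (tar A f) = tob A (pdom O f);
  n_cod : forall k (f : pAr O k), pcod O' (tar A f) = tob A (pcod O f);
  n_id : forall k (x : pOb O k), tar A (pid O x) = pid O' (tob A x);
  n_comp : forall k (g f : pAr O k) e e',
      tar A (pcomp O g f e) = pcomp O' (tar A g) (tar A f) e';
  n_ob : forall k k' (P : H1 K k' k) (x : pOb O k),
      tob A (pobmap O P x) = pobmap O' P (tob A x);
  n_ar : forall k k' (P : H1 K k' k) (f : pAr O k),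
      tar A (parmap O P f) = parmap O' P (tar A f);
  n_2 : forall k k' (a : C2 K k' k) (x : pOb O k), tar A (p2 O a x) = p2 O' a (tob A x)
}.

Arguments is_2nat {K O O'} A.

Definition tcomp (K : Data) (O O' O'' : PSh K) (G : PTrans O' O'') (A : PTrans O O') :
  PTrans O O'' := MkPTrans (fun k x => tob G (tob A x)) (fun k f => tar G (tar A f)).
Arguments tcomp {K O O' O''} G A.

Definition PMod (K : Data) (O O' : PSh K) := forall k, pOb O k -> pAr O' k.

Arguments PMod {K} O O'.

Definition is_modif (K : Data) (O O' : PSh K) (A B : PTrans O O') (mu : PMod O O') : Prop :=
  (forall k (x : pOb O k), pdom O' (mu k x) = tob A x /\ pcod O' (mu k x) = tob B x) /\
  (forall k (f : pAr O k) e e',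
      pcomp O' (tar B f) (mu k (pdom O f)) e = pcomp O' (mu k (pcod O f)) (tar A f) e') /\
  (forall k k' (P : H1 K k' k) (x : pOb O k), mu k' (pobmap O P x) = parmap O' P (mu k x)).
Arguments is_modif {K O O'} A B mu.

Definition RepP (K : Data) (Y : Ob K) : PSh K :=
  MkPSh K (fun k => H1 K k Y) (fun k => C2 K k Y)
    (fun k a => src2 a) (fun k a => tgt2 a) (fun k F => id2 F)
    (fun k g f _ => vcomp g f)
    (fun k k' P M => comp1 M P) (fun k k' P a => whr a P) (fun k k' a M => whl M a).

Definition ModP (K : Data) (HK : is_twocat K) (X0 X : Ob K) (I T : H1 K X0 X)
    (ext : optype I T X) (t : C2 K X0 X) : PSh K :=
  MkPSh K (ModOb K X0 X I T ext t) (ModAr K X0 X I T ext t)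
    (fun k g => mdom g) (fun k g => mcod g)
    (mid K HK X0 X I T ext t) (mcomp K HK X0 X I T ext t)
    (fun k k' P M => mres K HK X0 X I T ext t k k' P M)
    (fun k k' P f => mresAr K HK X0 X I T ext t k k' P f)
    (fun k k' a M => mres2 K HK X0 X I T ext t k k' a M).

Definition postcomp (K : Data) (X0 X : Ob K) (S : H1 K X0 X) : PTrans (RepP K X0) (RepP K X) :=
  @MkPTrans K (RepP K X0) (RepP K X)
    (fun k (M : H1 K k X0) => comp1 S M) (fun k (a : C2 K k X0) => whl S a).

Definition forgetU (K : Data) (HK : is_twocat K) (X0 X : Ob K) (I T : H1 K X0 X)
    (ext : optype I T X) (t : C2 K X0 X) : PTrans (ModP K HK X0 X I T ext t) (RepP K X) :=
  @MkPTrans K (ModP K HK X0 X I T ext t) (RepP K X)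
    (fun k (M : ModOb K X0 X I T ext t k) => mcar M)
    (fun k (g : ModAr K X0 X I T ext t k) => mcell g).

Definition unit_mod (K : Data) (X0 X : Ob K) (t : C2 K X0 X) : PMod (RepP K X0) (RepP K X) :=
  fun k (M : H1 K k X0) => whr t M.

Definition bij_on (A B : Type) (P : A -> Prop) (Q : B -> Prop) (f : A -> B) : Prop :=
  (forall x, P x -> Q (f x)) /\
  (forall x y, P x -> P y -> f x = f y -> x = y) /\
  (forall y, Q y -> exists x, P x /\ f x = y).
Arguments bij_on {A B} P Q f.

(* Relative adjunction F _J-| G in K^ over J : C0 -> K(-,Y), with unit iota,
   where the 1-cells are 2-natural transformations and the 2-cells
   modifications: for every object O of K^ (a 2-functor K^op -> Cat) and
   1-cells A : O -> C0, B : O -> D, the map alpha |-> G alpha . iota A from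
   modifications FA => B to modifications JA => GB is a bijection.
   (Vertical composition in K(-,Y) is componentwise [vcomp], which is the
   composition [pcomp] of [RepP K Y].) *)
Definition rel_adj_hat (K : Data) (Y : Ob K) (C0 D : PSh K)
    (J : PTrans C0 (RepP K Y)) (F : PTrans C0 D) (G : PTrans D (RepP K Y))
    (iota : PMod C0 (RepP K Y)) : Prop :=
  is_2functor C0 /\ is_2functor D /\ is_2functor (RepP K Y) /\
  is_2nat J /\ is_2nat F /\ is_2nat G /\ is_modif J (tcomp G F) iota /\
  forall (O : PSh K), is_2functor O ->
  forall (A : PTrans O C0) (B : PTrans O D), is_2nat A -> is_2nat B ->
    bij_on (is_modif (tcomp F A) B) (is_modif (tcomp J A) (tcomp G B))
      (fun (alpha : PMod O D) k x => vcomp (tar G (alpha k x)) (iota k (tob A x))).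
Arguments rel_adj_hat {K Y C0 D} J F G iota.

(* Main.v *)
Require Import Defs.
From Corelib Require Import ssreflect ssrfun ssrbool.
From Stdlib Require Import ProofIrrelevance FunctionalExtensionality.

Section Main.
Variables (K : TwoCat) (X0 X : Ob K) (I T : H1 K X0 X)
    (ext : optype I T X) (t : C2 K X0 X).
Hypothesis Hrm : is_relmonad I T ext t.
Let HK := tc_ax K.

Lemma opPI (Y Z Z' : Ob K) (F : H1 K X0 Z) (G : H1 K Y Z) (op : optype F G Z') O A B h e e' :
  op O A B h e = op O A B h e'.
Proof. by apply: opE. Qed.

Lemma modob_eq Kc (M N : ModOb K X0 X I T ext t Kc) : mcar M = mcar N ->
  (forall O A B h e e', mop M O A B h e = mop N O A B h e') -> M = N.
Proof.
case: M N => m mo mk [n no nk] /= E; subst n => H.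
have E : mo = no.
  do 5 (apply: functional_extensionality_dep => ?); exact: H.
subst no; f_equal; apply: proof_irrelevance.
Qed.

Lemma modar_eq Kc (f g : ModAr K X0 X I T ext t Kc) :
  mdom f = mdom g -> mcod f = mcod g -> mcell f = mcell g -> f = g.
Proof.
case: f g => d c m h [d' c' m' h'] /= E1 E2 E3; subst; f_equal; apply: proof_irrelevance.
Qed.

Lemma mop_eq Kc (M N : ModOb K X0 X I T ext t Kc) O A B h e e' :
  M = N -> mop M O A B h e = mop N O A B h e'.
Proof. by move=> E; subst; apply: opE. Qed.

Lemma mor_prop Kc (g : ModAr K X0 X I T ext t Kc) M N :
  mdom g = M -> mcod g = N ->
  forall O A B h e e', vcomp (whr (mcell g) B) (mop M O A B h e) = mop N O A B (vcomp (whr (mcell g) B) h) e'.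
Proof. case: g => d c m [? H] /= E1 E2; subst; exact: H. Qed.

Lemma mor_cell Kc (g : ModAr K X0 X I T ext t Kc) : cell (mcell g) (mcar (mdom g)) (mcar (mcod g)).
Proof. by case: g => d c m [H ?]. Qed.

Arguments modob_eq {Kc} M N.
Arguments modar_eq {Kc} f g.
Arguments mop_eq {Kc} M N {O A B h e e'}.
Arguments mor_prop {Kc} g M N.
Arguments mor_cell {Kc} g.

Definition free_op k (M : H1 K k X0) : optype I (comp1 T M) X :=
  fun O A B h e => ext O A (comp1 M B) h (cell_eq e erefl (esym (comp1A HK T M B))).
Arguments free_op {k} M.

Lemma free_alg {k} (M : H1 K k X0) : is_alg ext t (comp1 T M) (free_op M).
Proof.
case: Hrm => uc [oc ow ol or] l1 l2 l3; rewrite /free_op.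
split; [split|..].
- move=> O A B h e; apply: cell_eq (oc _ _ _ _ _) _ _ => //; exact: comp1A.
- move=> O O' Q A B h e e'.
  have e2 : cell (whr h Q) (comp1 I (comp1 A Q)) (comp1 T (comp1 (comp1 M B) Q)).
    apply: cell_eq (cellW HK Q (cell_eq e erefl (esym (comp1A HK T M B)))) _ _;
    by rewrite !(comp1A HK).
  by rewrite -(ow _ _ _ _ _ _ _ e2); apply: opE => //; rewrite !(comp1A HK).
- move=> O A A' B a h ca e e'; exact: (ol _ _ _ _ _ _ ca).
- move=> O A B B' b h cb e e'.
  have cb' : cell (whl M b) (comp1 M B) (comp1 M B') by apply: cellL.
  have e2 : cell (vcomp (whl T (whl M b)) h) (comp1 I A) (comp1 T (comp1 M B')).
    exact: cellV (cellL HK T cb') (cell_eq e erefl (esym (comp1A HK T M B))).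
  transitivity (ext O A (comp1 M B') (vcomp (whl T (whl M b)) h) e2).
    by apply: opE => //; rewrite (whl_comp HK).
  by rewrite (whl_comp HK T M b) (or _ _ _ _ _ _ cb' (cell_eq e erefl (esym (comp1A HK T M B))) e2).
- by move=> O A B h e; apply: l1.
- move=> O A C B h kk eh ek e; rewrite -(l3 _ _ _ _ _ _ ek _ (cell_eq e erefl (esym (comp1A HK T M B)))).
  exact: opE.
Qed.

Definition freeM {k} (M : H1 K k X0) : ModOb K X0 X I T ext t k :=
  MkModOb _ _ _ _ _ _ _ _ (comp1 T M) (free_op M) (free_alg M).

Lemma free_mor {k} (a : C2 K k X0) : is_mor (freeM (src2 a)) (freeM (tgt2 a)) (whl T a).
Proof.
split; first exact: (whl_cell HK).
move=> O A B h e e' /=; rewrite /free_op.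
have cb : cell (whr a B) (comp1 (src2 a) B) (comp1 (tgt2 a) B) by exact: (whr_cell HK).
have e1 := cell_eq e erefl (esym (comp1A HK T (src2 a) B)).
have e2 : cell (vcomp (whl T (whr a B)) h) (comp1 I A) (comp1 T (comp1 (tgt2 a) B)).
  exact: cellV (cellL HK T cb) e1.
transitivity (ext O A (comp1 (tgt2 a) B) (vcomp (whl T (whr a B)) h) e2); last first.
  by apply: opE => //; rewrite (whl_whr HK).
rewrite (op_natr (rm_op Hrm) cb e1 e2); f_equal; [exact: (whl_whr HK) | exact: opE].
Qed.

Definition freeAr {k} (a : C2 K k X0) : ModAr K X0 X I T ext t k :=
  MkModAr _ _ _ _ _ _ _ _ _ _ _ (free_mor a).

Definition Fn : PTrans (RepP K X0) (ModP K HK X0 X I T ext t) :=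
  @MkPTrans K (RepP K X0) (ModP K HK X0 X I T ext t) (fun k M => freeM M) (fun k a => freeAr a).

Lemma rep_2f (Y : Ob K) : is_2functor (RepP K Y).
Proof.
split => /=.
- by move=> k x; case: (id2_cell HK x).
- by move=> k x; case: (id2_cell HK x).
- by move=> k g f e; case: (vcomp_cell HK e).
- by move=> k g f e; case: (vcomp_cell HK e).
- move=> k h g f e1 e2 e3 e4; apply: (vcompA HK) => //.
- by move=> k f e; apply: (vcomp_idl HK).
- by move=> k f e; apply: (vcomp_idr HK).
- by move=> k k' P f; case: (whr_cell HK f P).
- by move=> k k' P f; case: (whr_cell HK f P).
- by move=> k k' P x; apply: (whr_id2 HK).
- by move=> k k' P g f e e'; apply: (whr_vcomp HK).
- by move=> k x; apply: (comp1_idr HK).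
- by move=> k f; apply: (whr_id1 HK).
- by move=> k k' k'' P Q x; rewrite (comp1A HK).
- by move=> k k' k'' P Q f; rewrite (whr_comp HK).
- by move=> k k' a x; case: (whl_cell HK x a).
- by move=> k k' a x; case: (whl_cell HK x a).
- by move=> k k' a f e e'; symmetry; exact: (Defs.interchange HK f a).
- by move=> k k' P x; apply: (whl_id2 HK).
- by move=> k k' a b x E e; apply: (whl_vcomp HK).
- by move=> k k' k'' a Q x; rewrite (whl_whr HK).
- by move=> k0 k k' R a x; rewrite (whl_comp HK).
Qed.

Notation MO := (ModOb K X0 X I T ext t).
Notation MA := (ModAr K X0 X I T ext t).
Notation mresK := (mres K HK X0 X I T ext t).

Lemma mres_id k (M : MO k) : mresK k k (id1 k) M = M.
Proof.
apply: modob_eq => /=; first exact: (comp1_idr HK).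
move=> O A B h e e'; rewrite /res_op; apply: opE => //; exact: (comp1_idl HK).
Qed.

Lemma mres_comp k k' k'' (P : H1 K k' k) (Q : H1 K k'' k') (M : MO k) :
  mresK k k'' (comp1 P Q) M = mresK k' k'' Q (mresK k k' P M).
Proof.
apply: modob_eq => /=; first exact: (comp1A HK).
move=> O A B h e e'; rewrite /res_op; apply: opE => //; symmetry; exact: (comp1A HK).
Qed.

Lemma scomp {k} (g f : MA k) : mdom g = mcod f -> src2 (mcell g) = tgt2 (mcell f).
Proof. by case: (mor_cell g) => -> _; case: (mor_cell f) => _ -> ->. Qed.

Lemma mod_2f : is_2functor (ModP K HK X0 X I T ext t).
Proof.
split => /=.
- by [].
- by [].
- by [].
- by [].
- move=> k h g f e1 e2 e3 e4; apply: modar_eq => //=.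
  apply: (vcompA HK); exact: scomp.
- move=> k f e; apply: modar_eq => //=.
  by case: (mor_cell f) => _ <-; apply: (vcomp_idl HK).
- move=> k f e; apply: modar_eq => //=.
  by case: (mor_cell f) => <- _; apply: (vcomp_idr HK).
- by [].
- by [].
- move=> k k' P x; apply: modar_eq => //=; exact: (whr_id2 HK).
- move=> k k' P g f e e'; apply: modar_eq => //=; apply: (whr_vcomp HK); exact: scomp.
- move=> k x; exact: mres_id.
- move=> k f; apply: modar_eq => /=; try exact: mres_id; exact: (whr_id1 HK).
- move=> k k' k'' P Q x; exact: mres_comp.
- move=> k k' k'' P Q f; apply: modar_eq => /=; try exact: mres_comp.
  symmetry; exact: (whr_comp HK).
- by [].
- by [].
- move=> k k' a f e e'; apply: modar_eq => //=.
  case: (mor_cell f) => <- <-; symmetry; exact: (Defs.interchange HK (mcell f) a).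
- move=> k k' P x; apply: modar_eq => /=.
  + by case: (id2_cell HK P) => -> _.
  + by case: (id2_cell HK P) => _ ->.
  + exact: (whl_id2 HK).
- move=> k k' a b x E e; apply: modar_eq => /=.
  + by case: (vcomp_cell HK E) => ->.
  + by case: (vcomp_cell HK E) => _ ->.
  + exact: (whl_vcomp HK).
- move=> k k' k'' a Q x; apply: modar_eq => /=.
  + by case: (whr_cell HK a Q) => -> _; apply: mres_comp.
  + by case: (whr_cell HK a Q) => _ ->; apply: mres_comp.
  + by rewrite (whl_whr HK).
- move=> k0 k k' R a x; apply: modar_eq => /=.
  + by case: (whl_cell HK R a) => -> _; apply: mres_comp.
  + by case: (whl_cell HK R a) => _ ->; apply: mres_comp.
  + by rewrite (whl_comp HK).
Qed.

Lemma free_res k k' (P : H1 K k' k) (M : H1 K k X0) : freeM (comp1 M P) = mresK k k' P (freeM M).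
Proof.
apply: modob_eq => /=; first exact: (comp1A HK).
move=> O A B h e e'; rewrite /res_op /free_op; apply: opE => //; symmetry; exact: (comp1A HK).
Qed.

Lemma post_nat (S : H1 K X0 X) : is_2nat (postcomp K X0 X S).
Proof.
split => /=.
- by move=> k f; case: (whl_cell HK S f).
- by move=> k f; case: (whl_cell HK S f).
- by move=> k x; apply: (whl_id2 HK).
- by move=> k g f e e'; apply: (whl_vcomp HK).
- by move=> k k' P x; apply: (comp1A HK).
- by move=> k k' P f; rewrite (whl_whr HK).
- by move=> k k' a x; rewrite (whl_comp HK).
Qed.

Lemma Fn_nat : is_2nat Fn.
Proof.
split => /=.
- by [].
- by [].
- move=> k x; apply: modar_eq => /=.
  + by case: (id2_cell HK x) => -> _.
  + by case: (id2_cell HK x) => _ ->.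
  + exact: (whl_id2 HK).
- move=> k g f e e'; apply: modar_eq => /=.
  + by case: (vcomp_cell HK e) => ->.
  + by case: (vcomp_cell HK e) => _ ->.
  + exact: (whl_vcomp HK).
- move=> k k' P x; exact: free_res.
- move=> k k' P f; apply: modar_eq => /=.
  + by case: (whr_cell HK f P) => -> _; apply: free_res.
  + by case: (whr_cell HK f P) => _ ->; apply: free_res.
  + by rewrite (whl_whr HK).
- move=> k k' a x; apply: modar_eq => /=.
  + by case: (whl_cell HK x a) => -> _; apply: free_res.
  + by case: (whl_cell HK x a) => _ ->; apply: free_res.
  + by rewrite (whl_comp HK).
Qed.

Definition Un := forgetU K HK X0 X I T ext t.

Lemma U_nat : is_2nat Un.
Proof.
split => /=.
- by move=> k f; case: (mor_cell f).
- by move=> k f; case: (mor_cell f).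
- by [].
- by [].
- by [].
- by [].
- by [].
Qed.

Lemma unit_modif : is_modif (postcomp K X0 X I) (tcomp Un Fn) (unit_mod K X0 X t).
Proof.
have [si ti] := rm_unit_cell Hrm.
split; [|split] => /=.
- by move=> k x; case: (whr_cell HK t x); rewrite si ti.
- move=> k f e e'; rewrite /unit_mod.
  have := Defs.interchange HK t f; rewrite si ti => ->; by [].
- by move=> k k' P x; rewrite /unit_mod (whr_comp HK).
Qed.

Lemma ct_cell {k} (M : H1 K k X0) : cell (whr t M) (comp1 I M) (comp1 T M).
Proof. by have [si ti] := rm_unit_cell Hrm; case: (whr_cell HK t M); rewrite si ti. Qed.

Lemma free_unit {k} (M : H1 K k X0) e : free_op M k M (id1 k) (whr t M) e = id2 (comp1 T M).
Proof.
rewrite /free_op -(rm_law2 Hrm (ct_cell M)); apply: opE => //; exact: (comp1_idr HK).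
Qed.

Lemma mor_free_eq {k} (g : MA k) (M : H1 K k X0) N (Hd : mdom g = freeM M) (Hc : mcod g = N) e :
  mcell g = mop N k M (id1 k) (vcomp (mcell g) (whr t M)) e.
Proof.
have ct := ct_cell M.
have e1 : cell (whr t M) (comp1 I M) (comp1 (comp1 T M) (id1 k)).
  by apply: cell_eq ct _ _ => //; rewrite (comp1_idr HK).
have cg : cell (mcell g) (comp1 T M) (mcar N) by have := mor_cell g; rewrite Hd Hc.
have e2 : cell (vcomp (whr (mcell g) (id1 k)) (whr t M)) (comp1 I M) (comp1 (mcar N) (id1 k)).
  exact: (cellV HK (cellW HK (id1 k) cg) e1).
have H := mor_prop g _ _ Hd Hc k M (id1 k) (whr t M) e1 e2.
transitivity (mop N k M (id1 k) (vcomp (whr (mcell g) (id1 k)) (whr t M)) e2); last first.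
  by apply: opE => //; rewrite (whr_id1 HK).
rewrite -H /= free_unit (whr_id1 HK).
case: cg => sg _; rewrite -sg; symmetry; exact: (vcomp_idr HK).
Qed.

Lemma ext_mor {k} (M : H1 K k X0) (N : MO k) f (e : cell f (comp1 I M) (comp1 (mcar N) (id1 k))) :
  is_mor (freeM M) N (mop N k M (id1 k) f e).
Proof.
have [oN _ aeN] := mok N.
split.
  apply: cell_eq (op_cell oN e) _ _ => //=; exact: (comp1_idr HK).
move=> O A B h e1 e2 /=.
have cfB := cellW HK B e.
have ew : cell (whr f B) (comp1 I (comp1 M B)) (comp1 (mcar N) B).
  by apply: cell_eq cfB _ _; rewrite -(comp1A HK) ?(comp1_idl HK).
have ew0 : cell (whr f B) (comp1 I (comp1 M B)) (comp1 (mcar N) (comp1 (id1 k) B)).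
  by apply: cell_eq cfB _ _; rewrite -(comp1A HK).
have gBeq : whr (mop N k M (id1 k) f e) B = mop N O (comp1 M B) B (whr f B) ew.
  rewrite -(op_whr oN e ew0); apply: opE => //; exact: (comp1_idl HK).
have ek : cell h (comp1 I A) (comp1 T (comp1 M B)).
  by apply: cell_eq e1 _ _; rewrite -?(comp1A HK).
have e3 : cell (vcomp (mop N O (comp1 M B) B (whr f B) ew) h) (comp1 I A) (comp1 (mcar N) B).
  exact: (cellV HK (op_cell oN ew) ek).
transitivity (vcomp (mop N O (comp1 M B) B (whr f B) ew) (ext O A (comp1 M B) h ek)).
  by rewrite gBeq /free_op; f_equal; apply: opE.
rewrite -(aeN O (comp1 M B) A B (whr f B) h ew ek e3).
by apply: opE => //; rewrite gBeq.
Qed.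

Lemma cST {x y} {a b : C2 K x y} {F G H} : cell a G H -> cell b F G -> src2 a = tgt2 b.
Proof. by case=> -> _ [_ ->]. Qed.

Lemma tnat {k} (a : C2 K k X0) :
  vcomp (whl T a) (whr t (src2 a)) = vcomp (whr t (tgt2 a)) (whl I a).
Proof.
have [si ti] := rm_unit_cell Hrm.
by have := Defs.interchange HK t a; rewrite si ti => ->.
Qed.

Section Adj.
Variables (O : PSh K) (A : PTrans O (RepP K X0)) (B : PTrans O (ModP K HK X0 X I T ext t)).
Hypotheses (HA : is_2nat A) (HB : is_2nat B).

Definition Phi (alpha : PMod O (ModP K HK X0 X I T ext t)) : PMod O (RepP K X) :=
  fun k x => vcomp (tar Un (alpha k x)) (unit_mod K X0 X t k (tob A x)).

Lemma phi_modif alpha : is_modif (tcomp Fn A) B alpha ->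
  is_modif (tcomp (postcomp K X0 X I) A) (tcomp Un B) (Phi alpha).
Proof.
move=> [Hc [Hn Hr]]; rewrite /Phi /unit_mod /=.
have cal : forall k (x : pOb O k), cell (mcell (alpha k x)) (comp1 T (tob A x)) (mcar (tob B x)).
  by move=> k x; have := mor_cell (alpha k x); case: (Hc k x) => /= -> ->.
split; [|split].
- move=> k x; have := cellV HK (cal k x) (ct_cell (tob A x)); by case.
- move=> k phi e e' /=.
  set a := tar A phi.
  have [sa ta] : cell a (tob A (pdom O phi)) (tob A (pcod O phi)).
    by split; [exact: (n_dom _ _ _ _ HA k phi) | exact: (n_cod _ _ _ _ HA k phi)].
  have cB : cell (mcell (tar B phi)) (mcar (tob B (pdom O phi))) (mcar (tob B (pcod O phi))).
    case: (mor_cell (tar B phi)) => s1 t1; split; [rewrite s1 | rewrite t1].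
      exact: (f_equal (@mcar _ _ _ _ _ _ _ _) (n_dom _ _ _ _ HB k phi)).
    exact: (f_equal (@mcar _ _ _ _ _ _ _ _) (n_cod _ _ _ _ HB k phi)).
  have e1 : pdom (ModP K HK X0 X I T ext t) (tar B phi) = pcod (ModP K HK X0 X I T ext t) (alpha k (pdom O phi)).
    have /= -> := n_dom _ _ _ _ HB k phi; case: (Hc k (pdom O phi)) => _ E; exact: (esym E).
  have e2 : pdom (ModP K HK X0 X I T ext t) (alpha k (pcod O phi)) = pcod (ModP K HK X0 X I T ext t) (tar (tcomp Fn A) phi).
    case: (Hc k (pcod O phi)) => E _; rewrite /= in E; rewrite /= E; congr freeM; exact: (esym ta).
  have Hm := f_equal (@mcell _ _ _ _ _ _ _ _) (Hn k phi e1 e2); simpl in Hm.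
  have cd := cal k (pdom O phi); have cc := cal k (pcod O phi).
  have ctd := ct_cell (tob A (pdom O phi)); have ctc := ct_cell (tob A (pcod O phi)).
  have cTa : cell (whl T a) (comp1 T (tob A (pdom O phi))) (comp1 T (tob A (pcod O phi))).
    by rewrite -sa -ta; exact: (whl_cell HK).
  have cIa : cell (whl I a) (comp1 I (tob A (pdom O phi))) (comp1 I (tob A (pcod O phi))).
    by rewrite -sa -ta; exact: (whl_cell HK).
  rewrite (vcompA HK (cST cB cd) (cST cd ctd)) Hm.
  rewrite -(vcompA HK (cST cc cTa) (cST cTa ctd)).
  have := tnat a; rewrite sa ta => ->.
  by rewrite (vcompA HK (cST cc ctc) (cST ctc cIa)).
- move=> k k' P x /=; rewrite (Hr k k' P x) /= (n_ob _ _ _ _ HA) /=.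
  rewrite (whr_vcomp HK P (cST (cal k x) (ct_cell (tob A x)))) (whr_comp HK); by [].
Qed.

Lemma phi_inj alpha beta : is_modif (tcomp Fn A) B alpha -> is_modif (tcomp Fn A) B beta ->
  Phi alpha = Phi beta -> alpha = beta.
Proof.
move=> Ha Hb E.
have Pa := phi_modif _ Ha.
apply: functional_extensionality_dep => k; apply: functional_extensionality => x.
have Exk : Phi alpha k x = Phi beta k x by rewrite E.
have [[sP tP] _] : cell (Phi alpha k x) (comp1 I (tob A x)) (mcar (tob B x)) /\ True.
  by split => //; case: Pa => H _; exact: H.
have e : cell (Phi alpha k x) (comp1 I (tob A x)) (comp1 (mcar (tob B x)) (id1 k)).
  by split; rewrite ?(comp1_idr HK).
have e' : cell (Phi beta k x) (comp1 I (tob A x)) (comp1 (mcar (tob B x)) (id1 k)).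
  by rewrite -Exk.
case: Ha => Hca _; case: Hb => Hcb _.
move: (Hca k x) (Hcb k x) => /= [da ca] [db cb].
apply: modar_eq; [by rewrite da db | by rewrite ca cb |].
rewrite (mor_free_eq (alpha k x) _ _ da ca e) (mor_free_eq (beta k x) _ _ db cb e').
by apply: opE.
Qed.

Definition efix {k} {M : H1 K k X0} {N : MO k} {f} (H : cell f (comp1 I M) (mcar N)) :
  cell f (comp1 I M) (comp1 (mcar N) (id1 k)) :=
  cell_eq H erefl (esym (comp1_idr HK _)).

Definition liftAr {k} {M : H1 K k X0} {N : MO k} {f} (H : cell f (comp1 I M) (mcar N)) : MA k :=
  MkModAr _ _ _ _ _ _ _ _ (freeM M) N (mop N k M (id1 k) f (efix H)) (ext_mor M N f (efix H)).

Lemma phi_surj f : is_modif (tcomp (postcomp K X0 X I) A) (tcomp Un B) f ->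
  exists alpha, is_modif (tcomp Fn A) B alpha /\ Phi alpha = f.
Proof.
move=> Hf.
have Hc : forall k x, cell (f k x) (comp1 I (tob A x)) (mcar (tob B x)).
  by move=> k x; exact: (proj1 Hf k x).
pose alpha := fun k (x : pOb O k) => liftAr (Hc k x).
exists alpha; split; last first.
  apply: functional_extensionality_dep => k; apply: functional_extensionality => x.
  rewrite /Phi /alpha /= /unit_mod.
  by case: (mok (tob B x)) => _ au _; apply: au.
split; [|split].
- by move=> k x.
- move=> k phi e e'; apply: modar_eq => /=;
    [by have /= -> := n_dom _ _ _ _ HA k phi | by have /= -> := n_cod _ _ _ _ HB k phi |].
  have /= sa := n_dom _ _ _ _ HA k phi; have /= ta := n_cod _ _ _ _ HA k phi.
  have /= db := n_dom _ _ _ _ HB k phi; have /= tb := n_cod _ _ _ _ HB k phi.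
  set a := tar A phi in sa ta *.
  set g := mcell (tar B phi).
  have cg : cell g (mcar (tob B (pdom O phi))) (mcar (tob B (pcod O phi))).
    by rewrite -db -tb; exact: mor_cell.
  have ca : cell a (tob A (pdom O phi)) (tob A (pcod O phi)) by split.
  have cfd := Hc k (pdom O phi); have cfc := Hc k (pcod O phi).
  have cIa : cell (whl I a) (comp1 I (tob A (pdom O phi))) (comp1 I (tob A (pcod O phi))).
    by rewrite -sa -ta; exact: (whl_cell HK).
  have hf := proj1 (proj2 Hf) k phi (cST cg cfd) (cST cfc cIa); simpl in hf.
  have e2 : cell (vcomp (whr g (id1 k)) (f k (pdom O phi))) (comp1 I (tob A (pdom O phi)))
              (comp1 (mcar (tob B (pcod O phi))) (id1 k)).
    rewrite (whr_id1 HK); apply: cell_eq (cellV HK cg cfd) _ _ => //; by rewrite (comp1_idr HK).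
  have Hmp := mor_prop (tar B phi) _ _ db tb k (tob A (pdom O phi)) (id1 k) (f k (pdom O phi)) (efix cfd) e2.
  have eA' : cell (vcomp (f k (pcod O phi)) (whl I a)) (comp1 I (tob A (pdom O phi)))
              (comp1 (mcar (tob B (pcod O phi))) (id1 k)).
    apply: cell_eq (cellV HK cfc cIa) _ _ => //; by rewrite (comp1_idr HK).
  have [oBc _ _] := mok (tob B (pcod O phi)).
  transitivity (vcomp (whr g (id1 k)) (mop (tob B (pdom O phi)) k (tob A (pdom O phi)) (id1 k) (f k (pdom O phi)) (efix cfd))).
    congr vcomp; [by rewrite (whr_id1 HK) | exact: opE].
  rewrite Hmp.
  transitivity (mop (tob B (pcod O phi)) k (tob A (pdom O phi)) (id1 k) (vcomp (f k (pcod O phi)) (whl I a)) eA').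
    by apply: opE => //; rewrite (whr_id1 HK) hf.
  rewrite (op_natl oBc ca (efix cfc) eA'); congr vcomp; exact: opE.
- move=> k k' P x; apply: modar_eq => /=;
    [by have /= -> := n_ob _ _ _ _ HA k k' P x; apply: free_res | exact: (n_ob _ _ _ _ HB k k' P x) |].
  have /= nB := n_ob _ _ _ _ HB k k' P x.
  have /= nA := n_ob _ _ _ _ HA k k' P x.
  have /= fr := proj2 (proj2 Hf) k k' P x.
  have e1 : cell (f k' (pobmap O P x)) (comp1 I (tob A (pobmap O P x)))
               (comp1 (mcar (mres K HK X0 X I T ext t k k' P (tob B x))) (id1 k')).
    rewrite -nB; exact: (efix (Hc k' _)).
  transitivity (mop (mres K HK X0 X I T ext t k k' P (tob B x)) k' (tob A (pobmap O P x)) (id1 k') (f k' (pobmap O P x)) e1).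
    exact: mop_eq.
  have [oB _ _] := mok (tob B x).
  have ew : cell (whr (f k x) P) (comp1 I (comp1 (tob A x) P)) (comp1 (mcar (tob B x)) (comp1 (id1 k) P)).
    by apply: cell_eq (cellW HK P (efix (Hc k x))) _ _; rewrite (comp1A HK).
  rewrite /= /res_op -(op_whr oB (efix (Hc k x)) ew).
  apply: opE => //; by rewrite ?(comp1_idr HK) ?(comp1_idl HK).
Qed.
End Adj.
End Main.

Theorem mainTheorem7 (K : TwoCat) (X0 X : Ob K) (I T : H1 K X0 X)
    (ext : optype I T X) (t : C2 K X0 X) :
  is_relmonad I T ext t ->
  exists F : PTrans (RepP K X0) (ModP K (tc_ax K) X0 X I T ext t),
    (forall k (M : H1 K k X0),
        mcar (tob F M) = comp1 T M /\
        (forall O (A : H1 K O X0) (B : H1 K O k) h e e',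
            mop (tob F M) O A B h e = ext O A (comp1 M B) h e')) /\
    (forall k (a : C2 K k X0), mcell (tar F a) = whl T a) /\
    rel_adj_hat (postcomp K X0 X I) F (forgetU K (tc_ax K) X0 X I T ext t)
      (unit_mod K X0 X t) /\
    (forall k (M : H1 K k X0) (N : ModOb K X0 X I T ext t k),
        (forall g : ModAr K X0 X I T ext t k, mdom g = tob F M -> mcod g = N ->
            cell (vcomp (mcell g) (whr t M)) (comp1 I M) (mcar N) /\
            (forall e, mop N k M (id1 k) (vcomp (mcell g) (whr t M)) e = mcell g)) /\
        (forall f : C2 K k X, cell f (comp1 I M) (mcar N) -> forall e,
            (exists g : ModAr K X0 X I T ext t k,
                mdom g = tob F M /\ mcod g = N /\ mcell g = mop N k M (id1 k) f e) /\
            vcomp (mop N k M (id1 k) f e) (whr t M) = f)) /\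
    (forall k (M : H1 K k X0),
        tob (tcomp (forgetU K (tc_ax K) X0 X I T ext t) F) M = tob (postcomp K X0 X T) M) /\
    (forall k (a : C2 K k X0),
        tar (tcomp (forgetU K (tc_ax K) X0 X I T ext t) F) a = tar (postcomp K X0 X T) a) /\
    (forall (O : PSh K), is_2functor O ->
     forall (A B : PTrans O (RepP K X0)), is_2nat A -> is_2nat B ->
     forall f : PMod O (RepP K X),
       is_modif (tcomp (postcomp K X0 X I) A) (tcomp (postcomp K X0 X T) B) f ->
     forall alpha : PMod O (ModP K (tc_ax K) X0 X I T ext t),
       is_modif (tcomp F A) (tcomp F B) alpha ->
       (forall k (x : pOb O k),
          vcomp (tar (forgetU K (tc_ax K) X0 X I T ext t) (alpha k x))
                (unit_mod K X0 X t k (tob A x)) = f k x) ->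
       forall k (x : pOb O k) e,
         tar (forgetU K (tc_ax K) X0 X I T ext t) (alpha k x)
         = ext k (tob A x) (tob B x) (f k x) e).
Proof.
move=> Hrm.
have HK := tc_ax K.
exists (Fn K X0 X I T ext t Hrm).
split; [|split; [|split; [|split; [|split; [|split]]]]].
- move=> k M; split => // O A B h e e' /=; rewrite /free_op; exact: opE.
- by [].
- split; first exact: rep_2f.
  split; first exact: mod_2f.
  split; first exact: rep_2f.
  split; first exact: post_nat.
  split; first exact: Fn_nat.
  split; first exact: U_nat.
  split; first exact: unit_modif.
  move=> O HO A B HA HB; split; [|split].
  + exact: phi_modif.
  + move=> x y Px Py Exy; exact: (phi_inj _ _ _ _ _ _ _ Hrm O A B HA HB x y Px Py Exy).
  + move=> y Qy; exact: phi_surj.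
- move=> k M N; split.
  + move=> g Hd Hc; split.
      have := mor_cell _ _ _ _ _ _ _ _ g; rewrite Hd Hc => cg.
      exact: (cellV (tc_ax K) cg (ct_cell _ _ _ _ _ _ _ Hrm M)).
    move=> e; symmetry; exact: (mor_free_eq _ _ _ _ _ _ _ Hrm g M N Hd Hc e).
  + move=> f cf e; split.
      by exists (MkModAr _ _ _ _ _ _ _ _ (freeM _ _ _ _ _ _ _ Hrm M) N _ (ext_mor _ _ _ _ _ _ _ Hrm M N f e)).
    by case: (mok N) => _ au _; apply: au.
- by [].
- by [].
- move=> O HO A B HA HB f Hf alpha Ha Heq k x e.
  case: Ha => Hc _; move: (Hc k x) => /= [da ca].
  have e0 : cell (vcomp (mcell (alpha k x)) (whr t (tob A x))) (comp1 I (tob A x))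
      (comp1 (comp1 T (tob B x)) (id1 k)).
    have := Heq k x; rewrite /= /unit_mod => ->.
    by apply: cell_eq e _ _; rewrite ?(comp1_idr HK).
  rewrite /= (mor_free_eq _ _ _ _ _ _ _ Hrm (alpha k x) _ _ da ca e0) /= /free_op.
  apply: opE; rewrite ?(comp1_idr HK) //.
  by have := Heq k x.
Qed.
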